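(* Let $(\mathbf X_n^I)_{n\ge1}$ be adapted to the filtration $\mathcal G=(\mathcal G_n)_{n\ge0}$. The following are equivalent: (i) $(\mathbf X_n^I)$ is partially $\mathcal G$-c.i.d.; (ii) for every $j\in I$ and every bounded measurable $f:\mathbb X\to\mathbb R$, $\big(\mathbb E[f(X_{n+1,j})\mid\mathcal G_n^j]\big)_{n\ge0}$ is a martingale with respect to $\mathcal G^j=(\mathcal G_n^j)_{n\ge0}$; (iii) for every $n\ge0$ and $j\in I$, $(\mathbf X^{I\setminus\{j\}}_{n+1},X_{\tau+1,j})\overset{d}{=}(\mathbf X^{I\setminus\{j\}}_{n+1},X_{n+1,j})$ for every finite $\mathcal G$-stopping time $\tau$ with $\tau\ge n$.
   Context: All random elements live on $(\Omega,\mathcal F,\mathbb P)$; $\mathbb X$ is Polish with Borel $\sigma$-algebra $\mathcal X$; $I$ is a finite or countable index set; $[X_{n,i}]_{n\ge1,i\in I}$ is an array of $\mathbb X$-valued random variables with rows $\mathbf X_n^I=(X_{n,i})_{i\in I}$, and $\mathbf X_n^J=(X_{n,i})_{i\in J}$ for $J\subset I$. For a filtration $\mathcal G=(\mathcal G_n)_{n\ge0}$ and $j\in I$, $\mathcal G_n^j=\mathcal G_n\vee\sigma(X_{n+1,i}:i\ne j)$. The process $(\mathbf X_n^I)$ is partially $\mathcal G$-c.i.d. if it is adapted to $\mathcal G$ and, for every $j\in I$, $k\ge1$, $n\ge0$ and bounded measurable $f:\mathbb X\to\mathbb R$, $\mathbb E[f(X_{n+1,j})\mid\mathcal G_n^j]=\mathbb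 E[f(X_{n+k,j})\mid\mathcal G_n^j]$ a.s. *)

(* Defs.v *)
From HB Require Import structures.
From mathcomp Require Import all_boot all_order all_algebra.
From mathcomp Require Import all_classical all_reals all_analysis.
Set Implicit Arguments. Unset Strict Implicit. Unset Printing Implicit Defensive.
Import Order.TTheory GRing.Theory Num.Theory.
Local Open Scope classical_set_scope.
Local Open Scope ring_scope.

Section Defs.
Context {R : realType}.

(* Polish space: a (pseudo)metric space that is complete (the type is a
   completePseudoMetricType), Hausdorff (so the pseudometric is a metric)
   and separable (has a countable dense subset). *)
Definition polish (X : completePseudoMetricType R) : Prop :=
  hausdorff_space X /\ exists2 D : set X, countable D & dense D.

Definition borel (X : topologicalType) : set (set X) := <<s open >>.

Definition bounded_borel_fun (X : topologicalType) (f : X -> R) : Prop :=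
  (forall B : set R, measurable B -> @borel X (f @^-1` B)) /\
  exists M : R, forall x, `|f x| <= M.

Context {d : measure_display} {Omega : measurableType d}.
Variable P : probability Omega R.

Definition sub_sigma (H : set (set Omega)) : Prop :=
  sigma_algebra setT H /\ H `<=` measurable.

Definition filtration (G : nat -> set (set Omega)) : Prop :=
  (forall n, sub_sigma (G n)) /\ (forall n, G n `<=` G n.+1).

Definition is_cond_exp (H : set (set Omega)) (Z Y : Omega -> R) : Prop :=
  [/\ (forall B : set R, measurable B -> H (Y @^-1` B)),
      P.-integrable setT (fun x => (Y x)%:E) &
      forall A, H A ->
        (\int[P]_(x in A) (Y x)%:E = \int[P]_(x in A) (Z x)%:E)%E].

Definition martingale (H : nat -> set (set Omega)) (M : nat -> Omega -> R) :=
  forall n, is_cond_exp (H n) (M n.+1) (M n).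

Definition stopping_time (G : nat -> set (set Omega)) (tau : Omega -> nat) :=
  forall m, G m (tau @^-1` [set m]).

Context {X : completePseudoMetricType R} {I : countType}.

(* array [X_{n,i}]; only the rows n >= 1 are used *)
Definition adapted (G : nat -> set (set Omega)) (Xa : nat -> I -> Omega -> X) :=
  forall n i B, (0 < n)%N -> @borel X B -> G n (Xa n i @^-1` B).

Definition Gj (G : nat -> set (set Omega)) (Xa : nat -> I -> Omega -> X)
    (j : I) (n : nat) : set (set Omega) :=
  <<s G n `|` \bigcup_(i in [set i | i != j])
        preimage_set_system setT (Xa n.+1 i) (@borel X) >>.

Definition partially_cid (G : nat -> set (set Omega))
    (Xa : nat -> I -> Omega -> X) : Prop :=
  adapted G Xa /\
  forall (j : I) (k n : nat) (f : X -> R), (0 < k)%N -> bounded_borel_fun f ->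
  forall Y1 Y2 : Omega -> R,
    is_cond_exp (Gj G Xa j n) (f \o Xa n.+1 j) Y1 ->
    is_cond_exp (Gj G Xa j n) (f \o Xa (n + k)%N j) Y2 ->
    {ae P, forall w, Y1 w = Y2 w}.

Definition prod_sigma : set (set (I -> X)) :=
  <<s \bigcup_(i in [set: I])
        preimage_set_system setT (fun g : I -> X => g i) (@borel X) >>.

Definition eq_in_law (Z1 Z2 : Omega -> (I -> X)) : Prop :=
  forall B, prod_sigma B -> P (Z1 @^-1` B) = P (Z2 @^-1` B).

End Defs.

(* Main.v *)
Require Import Defs.
From HB Require Import structures.
From mathcomp Require Import all_boot all_order all_algebra.
From mathcomp Require Import all_classical all_reals all_analysis.
From mathcomp Require Import measurable_realfun.
From mathcomp Require Import zify ring lra.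
Import Order.TTheory GRing.Theory Num.Theory.
Local Open Scope classical_set_scope.
Local Open Scope ring_scope.
Set Implicit Arguments. Unset Strict Implicit. Unset Printing Implicit Defensive.


Section CE.
Variables (R : realType) (d : measure_display) (Omega : measurableType d)
  (P : probability Omega R).
Variables (H : set (set Omega)) (sH : sub_sigma H).
Local Notation OH := (g_sigma_algebraType H).

Lemma OH_measE : (@measurable _ OH) = H.
Proof. exact: (measurable_g_measurableTypeE sH.1). Qed.

Lemma OH_meas (A : set OH) : measurable A -> measurable (A : set Omega).
Proof. by rewrite OH_measE => /sH.2. Qed.

Definition PH (_ : sub_sigma H) : set OH -> \bar R := fun A => P A.

Let PH0 : PH sH set0 = 0%E. Proof. exact: measure0. Qed.
Let PH_ge0 A : (0 <= PH sH A)%E. Proof. exact: measure_ge0. Qed.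
Let PH_sa : semi_sigma_additive (PH sH).
Proof.
move=> F mF tF mU; apply: (@measure_semi_sigma_additive _ Omega _ P) => //.
- by move=> n; apply: OH_meas.
- exact: OH_meas.
Qed.

HB.instance Definition _ := isMeasure.Build _ OH R (PH sH) PH0 PH_ge0 PH_sa.
HB.instance Definition _ := Measure_isProbability.Build _ OH R (PH sH)
  (@probability_setT _ _ _ P).

Lemma mid : measurable_fun [set: Omega] (id : Omega -> OH).
Proof. by move=> _ B mB; rewrite setTI; apply: OH_meas. Qed.

Lemma OH_mfun (f : Omega -> \bar R) :
  measurable_fun setT (f : OH -> \bar R) -> measurable_fun [set: Omega] f.
Proof.
move=> mf _ B mB; have := mf measurableT B mB; exact: OH_meas.
Qed.

Lemma OH_integral (f : Omega -> \bar R) (A : set Omega) : H A ->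
  measurable_fun setT (f : OH -> \bar R) -> P.-integrable A f ->
  (\int[PH sH]_(x in A) f x = \int[P]_(x in A) f x)%E.
Proof.
move=> HA mf intf.
have := @integral_pushforward _ _ Omega OH R id mid P A f mf intf.
by rewrite OH_measE => /(_ HA).
Qed.

Lemma OH_integrable (f : Omega -> \bar R) (A : set Omega) : H A ->
  measurable_fun setT (f : OH -> \bar R) -> P.-integrable A f -> (PH sH).-integrable (A : set OH) f.
Proof.
move=> HA mf intf.
have := @integrable_pushforward _ _ Omega OH R id mid P A f mf intf.
by rewrite OH_measE => /(_ HA).
Qed.

Lemma integrable_OH (f : Omega -> \bar R) :
  measurable_fun setT (f : OH -> \bar R) -> (PH sH).-integrable [set: OH] f ->
  P.-integrable [set: Omega] f.
Proof.
move=> mf /integrableP[_ fi]; apply/integrableP; split; first exact: OH_mfun.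
have := @ge0_integral_pushforward _ _ Omega OH R id mid P setT (abse \o f)
  measurableT (measurableT_comp (@abse_measurable R setT) mf) (fun _ _ => abse_ge0 _).
by move=> <-.
Qed.

Section CEex.
Variables (Z : Omega -> R) (intZ : P.-integrable [set: Omega] (EFin \o Z)).

Definition nuH : set OH -> \bar R := fun A => induced_charge intZ A.

Let nuH0 : nuH set0 = 0%E. Proof. exact: charge0. Qed.
Let nuH_fin A : measurable A -> nuH A \is a fin_num.
Proof. by move=> mA; apply: fin_num_measure; apply: OH_meas. Qed.
Let nuH_sa : semi_sigma_additive nuH.
Proof.
move=> F mF tF mU; apply: (@charge_semi_sigma_additive _ Omega _ (induced_charge intZ)) => //.
- by move=> n; apply: OH_meas.
- exact: OH_meas.
Qed.

HB.instance Definition _ := isCharge.Build _ OH R nuH nuH0 nuH_fin nuH_sa.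

Lemma nuH_dom : nuH `<< PH sH.
Proof.
apply/null_content_dominatesP => A mA PA.
rewrite /nuH /induced_charge; apply: null_set_integral => //.
- exact: OH_meas.
- by apply: measurable_funTS; case/integrableP: intZ.
Qed.

Definition ceY : Omega -> R := fun x => fine (Radon_Nikodym nuH (PH sH) x).

Lemma ceY_E : EFin \o ceY = Radon_Nikodym nuH (PH sH).
Proof.
by apply/funext => x /=; rewrite /ceY fineK // Radon_Nikodym_fin_num //; exact: nuH_dom.
Qed.

Lemma ceY_mOH : measurable_fun setT ((EFin \o ceY) : OH -> \bar R).
Proof. rewrite ceY_E; apply: measurable_int; apply: Radon_Nikodym_integrable; exact: nuH_dom. Qed.

Lemma ceY_int : P.-integrable [set: Omega] (EFin \o ceY).
Proof.
apply: integrable_OH; first exact: ceY_mOH.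
rewrite ceY_E; apply: Radon_Nikodym_integrable; exact: nuH_dom.
Qed.

Lemma CE_exists : is_cond_exp P H Z ceY.
Proof.
split.
- move=> B mB; rewrite -OH_measE -(setTI (_ @^-1` _)).
  by have /measurable_EFinP := ceY_mOH; apply.
- exact: ceY_int.
- move=> A HA.
  have mA : measurable (A : set OH) by rewrite OH_measE.
  have -> : (\int[P]_(x in A) (Z x)%:E)%E = nuH A by [].
  rewrite (Radon_Nikodym_integral nuH_dom mA) -ceY_E.
  rewrite OH_integral //; first exact: ceY_mOH.
  apply: integrableS ceY_int => //; exact: sH.2.
Qed.

End CEex.

Lemma CE_unique (Y1 Y2 : Omega -> R) :
  (forall B : set R, measurable B -> H (Y1 @^-1` B)) ->
  (forall B : set R, measurable B -> H (Y2 @^-1` B)) ->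
  P.-integrable setT (EFin \o Y1) -> P.-integrable setT (EFin \o Y2) ->
  (forall A, H A -> (\int[P]_(x in A) (Y1 x)%:E = \int[P]_(x in A) (Y2 x)%:E)%E) ->
  {ae P, forall w, Y1 w = Y2 w}.
Proof.
move=> m1 m2 i1 i2 e.
have mY1 : measurable_fun setT ((EFin \o Y1) : OH -> \bar R).
  by apply/measurable_EFinP => _ B mB; rewrite setTI OH_measE; exact: m1.
have mY2 : measurable_fun setT ((EFin \o Y2) : OH -> \bar R).
  by apply/measurable_EFinP => _ B mB; rewrite setTI OH_measE; exact: m2.
have HT : H setT by case: sH => -[H0 HC _] _; rewrite -(setD0 setT); exact: HC.
have := @integral_ae_eq _ OH R (PH sH) setT measurableT (EFin \o Y2) (EFin \o Y1)
  (OH_integrable HT mY1 i1) mY2.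
have : forall E : set OH, E `<=` setT -> measurable E ->
  (\int[PH sH]_(x in E) (EFin \o Y1) x = \int[PH sH]_(x in E) (EFin \o Y2) x)%E.
  move=> E _ mE; rewrite OH_measE in mE.
  rewrite !OH_integral //; first exact: e.
  - by apply: integrableS i2 => //; exact: sH.2.
  - by apply: integrableS i1 => //; exact: sH.2.
move=> h /(_ h) [N [mN PN sN]].
exists N; split.
- exact: OH_meas.
- exact: PN.
- move=> w /= nY; apply: sN => /= /(_ I) [] eY; exact: nY.
Qed.
Lemma CE_ae_int (Z1 Z2 Y1 Y2 : Omega -> R) A :
  is_cond_exp P H Z1 Y1 -> is_cond_exp P H Z2 Y2 ->
  {ae P, forall w, Y1 w = Y2 w} -> H A ->
  (\int[P]_(x in A) (Z1 x)%:E = \int[P]_(x in A) (Z2 x)%:E)%E.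
Proof.
move=> [m1 i1 e1] [m2 i2 e2] [N [mN PN sN]] HA.
rewrite -e1 // -e2 //; apply: ae_eq_integral.
- exact: sH.2.
- apply: measurable_funTS; exact: (measurable_int _ i1).
- apply: measurable_funTS; exact: (measurable_int _ i2).
- exists N; split => // w /= nw; apply: sN => /= e; apply: nw => _; by rewrite e.
Qed.
End CE.


Section Main.
Variables (R : realType) (d : measure_display) (Omega : measurableType d)
  (P : probability Omega R) (X : completePseudoMetricType R) (I : countType)
  (Xa : nat -> I -> Omega -> X) (G : nat -> set (set Omega)).
Hypotheses (hG : filtration G) (hA : adapted G Xa).

Lemma G_meas n : G n `<=` measurable.
Proof. exact: (hG.1 n).2. Qed.

Lemma Xa_meas m i (B : set X) : (0 < m)%N -> borel B -> measurable (Xa m i @^-1` B).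
Proof. by move=> m0 bB; apply: G_meas; apply: hA. Qed.

Lemma Gj_sub j n : sub_sigma (Gj G Xa j n).
Proof.
split; first exact: smallest_sigma_algebra.
apply: smallest_sub; first exact: sigma_algebra_measurable.
move=> A [A0|[i _ [B bB <-]]]; first exact: (G_meas A0).
by rewrite setTI; apply: Xa_meas.
Qed.

Lemma Gj_meas j n : Gj G Xa j n `<=` measurable.
Proof. exact: (Gj_sub j n).2. Qed.

Lemma G_Gj j n : G n `<=` Gj G Xa j n.
Proof. by move=> A GA; apply: sub_sigma_algebra; left. Qed.

Lemma Gj_mono j n : Gj G Xa j n `<=` Gj G Xa j n.+1.
Proof.
apply: smallest_sub; first exact: smallest_sigma_algebra.
move=> A [A0|[i _ [B bB <-]]].
- by apply: sub_sigma_algebra; left; exact: hG.2.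
- by apply: sub_sigma_algebra; left; rewrite setTI; apply: hA.
Qed.

Lemma Gj_monoS j n m : (n <= m)%N -> Gj G Xa j n `<=` Gj G Xa j m.
Proof.
elim: m => [|m IH]; first by rewrite leqn0 => /eqP ->.
rewrite leq_eqVlt => /orP[/eqP -> //|]; rewrite ltnS => /IH h A hA'.
exact: Gj_mono (h _ hA').
Qed.

Lemma bb_mfun (f : X -> R) m j : (0 < m)%N -> bounded_borel_fun f ->
  measurable_fun [set: Omega] (f \o Xa m j).
Proof.
move=> m0 [bf _] _ B mB; rewrite setTI.
have -> : (f \o Xa m j) @^-1` B = Xa m j @^-1` (f @^-1` B) by [].
by apply: Xa_meas => //; exact: bf.
Qed.

Lemma bb_int (f : X -> R) m j (A : set Omega) : (0 < m)%N -> bounded_borel_fun f ->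
  measurable A -> P.-integrable A (EFin \o (f \o Xa m j)).
Proof.
move=> m0 bf mA; apply: measurable_bounded_integrable => //.
- exact: (le_lt_trans (probability_le1 P mA)) (ltry _).
- exact: measurable_funTS (bb_mfun j m0 bf).
- case: bf => _ [M hM]; rewrite /bounded_near; near=> M' => x _ /=.
  apply: le_trans (hM _) _; near: M'; apply: nbhs_pinfty_ge; exact: num_real.
Unshelve. all: by end_near.
Qed.

Definition cint m j (f : X -> R) A := (\int[P]_(x in A) ((f \o Xa m j) x)%:E)%E.

Definition CID2 := forall j (f : X -> R) n A, bounded_borel_fun f ->
  Gj G Xa j n A -> cint n.+1 j f A = cint n.+2 j f A.

Lemma CID2_k : CID2 -> forall j f n A k, bounded_borel_fun f ->
  Gj G Xa j n A -> cint n.+1 j f A = cint (n + k.+1) j f A.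
Proof.
move=> h j f n A k bf hA'; elim: k => [|k IH]; first by rewrite addn1.
rewrite IH !addnS; apply: h => //.
by apply: (Gj_monoS (leq_addr k n)).
Qed.

Lemma int_row m j f : bounded_borel_fun f ->
  P.-integrable [set: Omega] (EFin \o (f \o Xa m.+1 j)).
Proof. by move=> bf; apply: bb_int. Qed.

Lemma cid_CID2 : partially_cid P G Xa <-> CID2.
Proof.
split.
- case=> _ h j f n A bf HA.
  have c1 := CE_exists (Gj_sub j n) (int_row n j bf).
  have c2 := CE_exists (Gj_sub j n) (int_row n.+1 j bf).
  have := h j 2%N n f isT bf; rewrite addn2 => /(_ _ _ c1 c2) ae.
  exact: (CE_ae_int (Gj_sub j n) c1 c2 ae HA).
- move=> h; split; first exact: hA.
  move=> j k n f k0 bf Y1 Y2 [m1 i1 e1] [m2 i2 e2].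
  apply: (CE_unique (Gj_sub j n)) => // A HA.
  rewrite e1 // e2 //; case: k k0 {m2 i2 e2} => // k _.
  exact: (CID2_k h k bf HA).
Qed.

Lemma mart_CID2 :
  (forall (j : I) (f : X -> R), bounded_borel_fun f ->
    forall M : nat -> Omega -> R,
      (forall n, is_cond_exp P (Gj G Xa j n) (f \o Xa n.+1 j) (M n)) ->
      martingale P (Gj G Xa j) M) <-> CID2.
Proof.
split.
- move=> h j f n A bf HA.
  pose M m := ceY (Gj_sub j m) (int_row m j bf).
  have cM m : is_cond_exp P (Gj G Xa j m) (f \o Xa m.+1 j) (M m).
    exact: CE_exists.
  have [_ _ e] := h j f bf M cM n.
  have [_ _ e1] := cM n; have [_ _ e2] := cM n.+1.
  rewrite /cint -e1 // e // e2 //; exact: Gj_mono.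
- move=> h j f bf M cM n.
  have [m1 i1 e1] := cM n; have [m2 i2 e2] := cM n.+1.
  split => // A HA; rewrite e1 // e2; last exact: Gj_mono.
  exact: h.
Qed.

End Main.


Section Aux.
Variable T : Type.
Implicit Types S C L : set (set T).

Lemma dynkin_ind C L : setI_closed C -> C `<=` L -> dynkin L -> <<s C >> `<=` L.
Proof.
move=> CI CL dL; rewrite -setI_closed_g_dynkin_g_sigma_algebra //.
exact: smallest_sub.
Qed.

Lemma sa_setT S : sigma_algebra setT S -> S setT.
Proof. by case=> S0 SC _; rewrite -(setD0 setT); exact: SC. Qed.

Lemma sa_setC S A : sigma_algebra setT S -> S A -> S (~` A).
Proof. by case=> _ SC _ /SC; rewrite setTD. Qed.

Lemma sa_setU S A B : sigma_algebra setT S -> S A -> S B -> S (A `|` B).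
Proof.
case=> S0 _ SU SA SB; rewrite -bigcup2E; apply: SU => -[|[|k]] //=.
Qed.

Lemma sa_setI S A B : sigma_algebra setT S -> S A -> S B -> S (A `&` B).
Proof.
move=> hS SA SB; rewrite -(setCK (A `&` B)) setCI.
by apply: sa_setC => //; apply: sa_setU => //; apply: sa_setC.
Qed.

End Aux.

Lemma sa_preimage T U (S : set (set U)) (phi : U -> T) : sigma_algebra setT S ->
  sigma_algebra setT [set D : set T | S (phi @^-1` D)].
Proof.
move=> hS; split => /=.
- by rewrite preimage_set0; case: hS.
- by move=> A SA; rewrite setTD preimage_setC; apply: sa_setC.
- by move=> F SF; rewrite preimage_bigcup; case: hS => _ _; apply.
Qed.

Section Probaux.
Variables (R : realType) (d : measure_display) (Omega : measurableType d)
  (P : probability Omega R).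

Definition pr (A : set Omega) : R := fine (P A).

Lemma prE A : measurable A -> P A = (pr A)%:E.
Proof. by move=> mA; rewrite fineK // fin_num_measure. Qed.

Lemma prU A B : measurable A -> measurable B -> A `&` B = set0 ->
  pr (A `|` B) = pr A + pr B.
Proof.
move=> mA mB AB; rewrite /pr measureU // fineD //; exact: fin_num_measure.
Qed.

Lemma pr_ge0 A : 0 <= pr A.
Proof. exact/fine_ge0/measure_ge0. Qed.

Lemma pr_le A B : measurable A -> measurable B -> A `<=` B -> pr A <= pr B.
Proof.
move=> mA mB AB; apply: fine_le; try exact: fin_num_measure.
by apply: le_measure => //; rewrite inE.
Qed.

Lemma pr_split A B : measurable A -> measurable B ->
  pr A = pr (A `&` B) + pr (A `&` ~` B).
Proof.
move=> mA mB; rewrite -prU //; first by rewrite -setIUr setUCr setIT.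
- exact: measurableI.
- by apply: measurableI => //; exact: measurableC.
- by rewrite setIACA setICr setI0.
Qed.

End Probaux.


Section Transfer.
Variables (R : realType) (d : measure_display) (Omega : measurableType d)
  (P : probability Omega R) (X : completePseudoMetricType R).
Local Notation Xm := (g_sigma_algebraType (@open X)).

Lemma bb_mfunX (f : X -> R) : bounded_borel_fun f ->
  measurable_fun [set: Xm] (f : Xm -> R).
Proof. by move=> [bf _] _ B mB; rewrite setTI; exact: bf. Qed.

Lemma bounded_int (g : Omega -> R) (A : set Omega) (M : R) : measurable A ->
  measurable_fun A g -> (forall x, `|g x| <= M) -> P.-integrable A (EFin \o g).
Proof.
move=> mA mg hM; apply: measurable_bounded_integrable => //.
- exact: (le_lt_trans (probability_le1 P mA)) (ltry _).
- rewrite /bounded_near; near=> M' => x _ /=.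
  apply: le_trans (hM _) _; near: M'; apply: nbhs_pinfty_ge; exact: num_real.
Unshelve. all: by end_near.
Qed.

Definition psi (A : set Omega) (phi : Omega -> X) : Omega -> Xm :=
  fun w => if w \in A then phi w else point.

Lemma psiE A phi (E : set X) : psi A phi @^-1` E =
  (A `&` phi @^-1` E) `|` (~` A `&` [set _ | E point]).
Proof.
apply/seteqP; split => w /=; rewrite /psi.
- by case: ifPn => [/set_mem wA h|]; [left|rewrite notin_setE => wA h; right].
- case=> -[wA h]; first by rewrite (mem_set wA).
  by rewrite ifN // notin_setE.
Qed.

Lemma psi_mfun A phi : measurable A ->
  (forall E, borel E -> measurable (phi @^-1` E)) ->
  measurable_fun [set: Omega] (psi A phi).
Proof.
move=> mA mphi _ E mE; rewrite setTI psiE; apply: measurableU; apply: measurableI.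
- exact: mA.
- exact: mphi.
- exact: measurableC.
- by case: (pselect (E point)) => h;
    [rewrite (_ : [set _ | E point] = setT)|rewrite (_ : [set _ | E point] = set0)];
    rewrite ?predeqE //.
Qed.

Lemma transfer (A : set Omega) (phi1 phi2 : Omega -> X) :
  measurable A ->
  (forall E, borel E -> measurable (phi1 @^-1` E)) ->
  (forall E, borel E -> measurable (phi2 @^-1` E)) ->
  (forall E, borel E -> P (A `&` phi1 @^-1` E) = P (A `&` phi2 @^-1` E)) ->
  forall f, bounded_borel_fun f ->
  (\int[P]_(x in A) ((f \o phi1) x)%:E = \int[P]_(x in A) ((f \o phi2) x)%:E)%E.
Proof.
move=> mA m1 m2 e f bf.
have mf := bb_mfunX bf.
have mEf : measurable_fun [set: Xm] (EFin \o (f : Xm -> R)) by exact/measurable_EFinP.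
have [M hM] := bf.2.
have mpsi1 := psi_mfun mA m1; have mpsi2 := psi_mfun mA m2.
have disj E : (A `&` phi1 @^-1` E) `&` (~` A `&` [set _ | E point]) = set0.
  by rewrite setIACA setICr set0I.
have lawE (E : set Xm) : measurable E ->
    pushforward P (psi A phi1) E = pushforward P (psi A phi2) E.
  move=> mE; rewrite /pushforward !psiE !measureU //.
  - by congr (_ + _)%E; exact: (e E mE).
  - by apply: measurableI => //; exact: m2.
  - apply: measurableI; first exact: measurableC.
    by case: (pselect (E point)) => h;
      [rewrite (_ : [set _ | E point] = setT)|rewrite (_ : [set _ | E point] = set0)];
      rewrite ?predeqE //.
  - by rewrite setIACA setICr set0I.
  - by apply: measurableI => //; exact: m1.
  - apply: measurableI; first exact: measurableC.
    by case: (pselect (E point)) => h;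
      [rewrite (_ : [set _ | E point] = setT)|rewrite (_ : [set _ | E point] = set0)];
      rewrite ?predeqE //.
have intpsi phi : measurable_fun [set: Omega] (psi A phi) ->
    P.-integrable [set: Omega] ((EFin \o (f : Xm -> R)) \o psi A phi).
  move=> mp; apply: (@bounded_int (f \o psi A phi) setT M) => //.
  - exact: measurableT_comp.
  - by move=> x; exact: hM.
have splitE (ph : Omega -> X) : measurable_fun [set: Omega] (psi A ph) ->
    (\int[P]_(x in [set: Omega]) ((EFin \o (f : Xm -> R)) \o psi A ph) x =
     \int[P]_(x in A) ((f \o ph) x)%:E + \int[P]_(x in ~` A) (f point)%:E)%E.
  move=> mp; rewrite -(setUv A) integral_setU_EFin //.
  - congr (_ + _)%E; apply: eq_integral => x xA /=; rewrite /psi.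
      by rewrite xA.
    by rewrite ifN // notin_setE -in_setE.
  - exact: measurableC.
  - by rewrite setUv; exact: measurableT_comp.
  - by rewrite /disj_set setICr.
have h1 := integral_pushforward mpsi1 mEf (intpsi _ mpsi1) measurableT.
have h2 := integral_pushforward mpsi2 mEf (intpsi _ mpsi2) measurableT.
rewrite preimage_setT in h1 h2.
have h12 : (\int[pushforward P (psi A phi1)]_(y in [set: Xm]) (EFin \o (f : Xm -> R)) y =
    \int[pushforward P (psi A phi2)]_(y in [set: Xm]) (EFin \o (f : Xm -> R)) y)%E.
  by apply: eq_measure_integral => E mE _; exact: lawE.
move: h12; rewrite h1 h2 (splitE _ mpsi1) (splitE _ mpsi2) => h12.
have cfin : (\int[P]_(x in ~` A) (f point)%:E)%E \is a fin_num.
  by rewrite integral_cst ?fin_numM ?fin_num_measure //; exact: measurableC.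
by move: (congr1 (fun z => z - \int[P]_(x in ~` A) (f point)%:E)%E h12);
  rewrite !addeK.
Qed.

End Transfer.


Section Law.
Variables (R : realType) (d : measure_display) (Omega : measurableType d)
  (P : probability Omega R) (X : completePseudoMetricType R) (I : countType).

Definition Smj (j : I) : set (set (I -> X)) :=
  <<s \bigcup_(i in [set i | i != j])
        preimage_set_system setT (fun g : I -> X => g i) (@borel X) >>.

Lemma Smj_sa j : sigma_algebra setT (Smj j).
Proof. exact: smallest_sigma_algebra. Qed.

Lemma borel_sa : sigma_algebra setT (@borel X).
Proof. exact: smallest_sigma_algebra. Qed.

Lemma Smj_inv j D : Smj j D ->
  forall g g', (forall i, i != j -> g i = g' i) -> D g -> D g'.
Proof.
pose S := [set D : set (I -> X) | forall g g', (forall i, i != j -> g i = g' i) -> D g -> D g'].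
suff: Smj j `<=` S by move=> h /h.
apply: smallest_sub.
- split.
  + by move=> g g' _.
  + move=> A SA g g' hg [_ nAg]; split => // Ag'; apply: nAg.
    by apply: (SA g') => // i /hg ->.
  + by move=> F SF g g' hg [k _ Fk]; exists k => //; exact: (SF k g).
- move=> A [i /= ij [B bB <-]] g g' hg [_ Bg]; split => //=.
  by rewrite -(hg i ij).
Qed.

Lemma Smj_prod j : Smj j `<=` prod_sigma (I:=I) (X:=X).
Proof.
apply: smallest_sub; first exact: smallest_sigma_algebra.
move=> A [i _ h]; apply: sub_sigma_algebra; by exists i.
Qed.

Definition CC (j : I) : set (set (I -> X)) :=
  fun B => exists D E, [/\ Smj j D, @borel X E & B = D `&` [set g | E (g j)]].

Lemma CC_setI j : setI_closed (CC j).
Proof.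
move=> _ _ [D1 [E1 [h1 e1 ->]]] [D2 [E2 [h2 e2 ->]]].
exists (D1 `&` D2), (E1 `&` E2); split.
- exact: sa_setI (Smj_sa j) h1 h2.
- exact: sa_setI borel_sa e1 e2.
- by apply/seteqP; split => g /= [[? ?] [? ?]].
Qed.

Lemma prod_CC j : prod_sigma (I:=I) (X:=X) `<=` <<s CC j >>.
Proof.
apply: smallest_sub; first exact: smallest_sigma_algebra.
move=> A [i _ [B bB <-]]; apply: sub_sigma_algebra.
have [->|ij] := eqVneq i j.
- exists setT, B; split => //; first exact: sa_setT (Smj_sa j).
- exists (setT `&` (fun g : I -> X => g i) @^-1` B), setT; split => //.
  + by apply: sub_sigma_algebra; exists i => //; exists B.
  + exact: sa_setT borel_sa.
  + by apply/seteqP; split => g /=; [move=> [? ?]; split|move=> [[? ?] ?]].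
Qed.

Lemma law_pi j (Z1 Z2 : Omega -> (I -> X)) :
  (forall w i, i != j -> Z1 w i = Z2 w i) ->
  (forall D, Smj j D -> measurable (Z2 @^-1` D)) ->
  (forall E, borel E -> measurable ((fun w => Z1 w j) @^-1` E)) ->
  (forall E, borel E -> measurable ((fun w => Z2 w j) @^-1` E)) ->
  (forall D E, Smj j D -> borel E ->
     P (Z2 @^-1` D `&` (fun w => Z1 w j) @^-1` E) =
     P (Z2 @^-1` D `&` (fun w => Z2 w j) @^-1` E)) ->
  eq_in_law P Z1 Z2.
Proof.
move=> h12 mD m1 m2 e.
have pre12 D : Smj j D -> Z1 @^-1` D = Z2 @^-1` D.
  move=> SD; apply/seteqP; split => w /=; apply: (Smj_inv SD) => i ij.
  - exact: h12.
  - by rewrite h12.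
pose L := [set B | [/\ measurable (Z1 @^-1` B), measurable (Z2 @^-1` B) &
                      P (Z1 @^-1` B) = P (Z2 @^-1` B)]].
suff: <<s CC j >> `<=` L by move=> h B /prod_CC /h [].
apply: dynkin_ind; first exact: CC_setI.
- move=> _ [D [E [SD bE ->]]]; rewrite /L /= !preimage_setI (pre12 D SD).
  split.
  + apply: measurableI; first exact: mD. exact: m1.
  + apply: measurableI; first exact: mD. exact: m2.
  + exact: e.
- split.
  + by rewrite /L /= !preimage_setT; split.
  + move=> B [mB1 mB2 eB]; rewrite /L /= -!preimage_setC; split.
    * exact: measurableC.
    * exact: measurableC.
    * by rewrite !probability_setC // eB.
  + move=> F tF LF.
    have mF1 k : measurable (Z1 @^-1` F k) by case: (LF k).
    have mF2 k : measurable (Z2 @^-1` F k) by case: (LF k).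
    have tpre (Z : Omega -> (I -> X)) : trivIset setT (fun k => Z @^-1` F k).
      apply/trivIsetP => a b _ _ ab; rewrite -preimage_setI.
      by move/trivIsetP : tF => /(_ a b Logic.I Logic.I ab) ->; rewrite preimage_set0.
    rewrite /L /= !preimage_bigcup; split.
    * exact: bigcupT_measurable.
    * exact: bigcupT_measurable.
    * rewrite !measure_bigcup //; apply: eq_eseriesr => k _; by case: (LF k).
Qed.

End Law.


Definition tle {T} (tau : T -> nat) (N : nat) : set T := [set w | (tau w <= N)%N].
Ltac lia' := unfold tle in *; simpl in *; lia.

Section Part3.
Variables (R : realType) (d : measure_display) (Omega : measurableType d)
  (P : probability Omega R) (X : completePseudoMetricType R) (I : countType)
  (Xa : nat -> I -> Omega -> X) (G : nat -> set (set Omega)).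
Hypotheses (hG : filtration G) (hA : adapted G Xa).

Definition rowOf m : Omega -> (I -> X) := fun w i => Xa m i w.

Lemma Smj_Gj j n D : Smj j D -> Gj G Xa j n (rowOf n.+1 @^-1` D).
Proof.
move=> SD; apply: (smallest_sub (sa_preimage (rowOf n.+1) (Gj_sub hG hA j n).1) _ SD).
move=> A [i ij [B bB <-]]; apply: sub_sigma_algebra; right; exists i => //.
by exists B.
Qed.

Lemma G_monoS n m : (n <= m)%N -> G n `<=` G m.
Proof.
elim: m => [|m IH]; first by rewrite leqn0 => /eqP ->.
rewrite leq_eqVlt => /orP[/eqP -> //|]; rewrite ltnS => /IH h A GA.
exact: hG.2 _ _ (h _ GA).
Qed.

Lemma st_le tau N : stopping_time G tau -> G N [set w | (tau w <= N)%N].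
Proof.
move=> st.
have -> : [set w | (tau w <= N)%N] =
    \bigcup_m (if (m <= N)%N then tau @^-1` [set m] else set0).
  apply/seteqP; split => w /=.
  - by move=> h; exists (tau w) => //; rewrite h.
  - by move=> [m _]; case: ifPn => // mN /= ->.
case: (hG.1 N).1 => G0 _ GU; apply: GU => m.
by case: ifPn => // mN; apply: (G_monoS mN).
Qed.

Lemma Xtau_meas j tau (E : set X) : stopping_time G tau -> borel E ->
  measurable [set w | E (Xa (tau w).+1 j w)].
Proof.
move=> st bE.
have -> : [set w | E (Xa (tau w).+1 j w)] =
    \bigcup_m (tau @^-1` [set m] `&` Xa m.+1 j @^-1` E).
  apply/seteqP; split => w /=.
  - by move=> h; exists (tau w).
  - by move=> [m _ [/= -> ?]].
apply: bigcupT_measurable => m; apply: measurableI.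
- exact: (G_meas hG (st m)).
- exact: (Xa_meas hG hA).
Qed.

Lemma stop_key j n tau (C E : set _) :
  (forall m A, Gj G Xa j m A ->
     P (A `&` Xa m.+1 j @^-1` E) = P (A `&` Xa m.+2 j @^-1` E)) ->
  stopping_time G tau -> (forall w, (n <= tau w)%N) -> Gj G Xa j n C -> borel E ->
  P (C `&` [set w | E (Xa (tau w).+1 j w)]) = P (C `&` Xa n.+1 j @^-1` E).
Proof.
move=> S st tn GC bE.
set XT := [set w | E (Xa (tau w).+1 j w)].
have mC : measurable C := Gj_meas hG hA GC.
have mXT : measurable XT := Xtau_meas j st bE.
have mX m : measurable (Xa m.+1 j @^-1` E) by exact: (Xa_meas hG hA).
have mle N : measurable (tle tau N) := G_meas hG (st_le N st).
have mnle N : measurable (~` tle tau N) := measurableC (mle N).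
have GjC N : (n <= N)%N -> Gj G Xa j N (C `&` ~` tle tau N).
  move=> nN; apply: sa_setI (Gj_sub hG hA j N).1 _ _.
  - exact: (Gj_monoS hG hA nN).
  - apply: G_Gj; exact: sa_setC (hG.1 N).1 (st_le N st).
have mI3 (A B D : set Omega) : measurable A -> measurable B -> measurable D ->
    measurable (A `&` B `&` D).
  by move=> mA mB mD; apply: measurableI => //; apply: measurableI.
set V := C `&` Xa n.+1 j @^-1` E.
have b k : pr P (C `&` tle tau (n + k)%N `&` XT) +
    pr P (C `&` ~` tle tau (n + k)%N `&` Xa (n + k).+1 j @^-1` E) = pr P V.
  elim: k => [|k IH].
  - rewrite addn0 (@pr_split _ _ _ P V (tle tau n)) //; last exact: measurableI.
    congr (pr P _ + pr P _).
    + apply/seteqP; split => w /=.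
      * move=> [[Cw lw] XTw]; have tw : tau w = n by apply/eqP; rewrite eqn_leq lw tn.
        by split => //; split => //; rewrite -tw.
      * move=> [[Cw Xw] lw]; have tw : tau w = n by apply/eqP; rewrite eqn_leq lw tn.
        by split => //; rewrite /XT /= tw.
    + by apply/seteqP; split => w /= [[? ?] ?].
  - set N := (n + k)%N in IH *.
    rewrite addnS -/N -IH.
    pose Mid := C `&` [set w | tau w = N.+1] `&` Xa N.+2 j @^-1` E.
    have mMid : measurable Mid.
      apply: mI3 => //; first exact: (G_meas hG (st N.+1)).
    have ea : pr P (C `&` tle tau N.+1 `&` XT) = pr P (C `&` tle tau N `&` XT) + pr P Mid.
      rewrite (@pr_split _ _ _ P _ (tle tau N)) //; last exact: mI3.
      congr (pr P _ + pr P _); apply/seteqP; split => w /=.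
      + by move=> [[[Cw lw] XTw] lw']; split => //; split => //; lia'.
      + by move=> [[Cw lw] XTw]; repeat (split => //=); lia'.
      + move=> [[[Cw lw] XTw] lw']; have tw : tau w = N.+1 by lia'.
        by split => //; move: XTw; rewrite /XT /= tw.
      + move=> [[Cw tw] Xw]; split; last by lia'.
        by split; [split => //; lia'|rewrite /XT /= tw].
    have eb : pr P (C `&` ~` tle tau N `&` Xa N.+2 j @^-1` E) =
        pr P Mid + pr P (C `&` ~` tle tau N.+1 `&` Xa N.+2 j @^-1` E).
      rewrite (@pr_split _ _ _ P _ (tle tau N.+1)) //; last exact: mI3.
      congr (pr P _ + pr P _); apply/seteqP; split => w /=.
      + move=> [[[Cw lw] Xw] lw']; split => //; split => //; lia'.
      + move=> [[Cw tw] Xw]; split; last by lia'.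
        by split => //; split => //; lia'.
      + by move=> [[[Cw lw] Xw] lw']; split => //; split => //.
      + by move=> [[Cw lw] Xw]; split; [split => //; split => //; lia'|].
    have ec : pr P (C `&` ~` tle tau N `&` Xa N.+1 j @^-1` E) =
        pr P (C `&` ~` tle tau N `&` Xa N.+2 j @^-1` E).
      rewrite /pr (S N) //; apply: GjC; exact: leq_addr.
    rewrite ea ec eb; lra.
set T0 := C `&` XT.
have mT0 : measurable T0 by exact: measurableI.
have mV : measurable V by exact: measurableI.
have bnd N : (n <= N)%N -> `|pr P T0 - pr P V| <= pr P (~` tle tau N).
  move=> nN; have := b (N - n)%N; rewrite subnKC // => bN.
  have e0 : pr P T0 = pr P (C `&` tle tau N `&` XT) + pr P (T0 `&` ~` tle tau N).
    rewrite (@pr_split _ _ _ P T0 (tle tau N)) //.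
    congr (_ + _); congr (pr P _); apply/seteqP; split => w /=.
    - by move=> [[? ?] ?].
    - by move=> [[? ?] ?].
  have h1 : 0 <= pr P (T0 `&` ~` tle tau N) := pr_ge0 _ _.
  have h2 : pr P (T0 `&` ~` tle tau N) <= pr P (~` tle tau N).
    by apply: pr_le => //; exact: measurableI.
  have h3 : 0 <= pr P (C `&` ~` tle tau N `&` Xa N.+1 j @^-1` E) := pr_ge0 _ _.
  have h4 : pr P (C `&` ~` tle tau N `&` Xa N.+1 j @^-1` E) <= pr P (~` tle tau N).
    apply: pr_le => //; first exact: mI3.
    by move=> w /= [[? ?] ?].
  rewrite ler_norml; apply/andP; split; lra.
have lim e : 0 < e -> exists N, (n <= N)%N /\ pr P (~` tle tau N) <= e.
  move=> e0.
  have cv : (P \o tle tau) x @[x --> \oo] --> P (\bigcup_N tle tau N).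
    apply: nondecreasing_cvg_mu => //.
    - by apply: bigcupT_measurable => k; exact: mle.
    - by move=> a c ac; apply/subsetPset => w; rewrite /tle /= => ?; lia.
  have U : \bigcup_N tle tau N = setT.
    by apply/seteqP; split => w // _; exists (tau w) => //=; rewrite /tle /=.
  rewrite U probability_setT in cv.
  have := @fine_cvg _ _ _ _ _ _ cv; move=> /(_ _)/cvgrPdist_le => /(_ e e0) [N0 _ hN0].
  exists (maxn n N0); split; first exact: leq_maxl.
  have := hN0 (maxn n N0) (leq_maxr _ _).
  have := @pr_split _ _ _ P setT (tle tau (maxn n N0)) measurableT (mle _).
  rewrite !setTI /pr probability_setT /= => ->.
  rewrite ler_norml => /andP[_ h]; lra.
have : pr P T0 = pr P V.
  apply/eqP; rewrite -subr_eq0 -normr_eq0; apply: contraT => hx.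
  have hx0 : 0 < `|pr P T0 - pr P V| by rewrite lt_def hx normr_ge0.
  have h2 : 0 < `|pr P T0 - pr P V| / 2 by rewrite divr_gt0.
  have [N [nN hN]] := lim _ h2.
  have hb := bnd N nN.
  have : False by lra.
  by [].
by rewrite (prE P mT0) (prE P mV) => ->.
Qed.

Lemma indic_bb (E : set X) : borel E -> bounded_borel_fun (\1_E : X -> R).
Proof.
move=> bE; split.
- move=> B mB; rewrite preimage_indic.
  case: ifPn => _; case: ifPn => _ //.
  + exact: sa_setT (borel_sa X).
  + exact: sa_setC (borel_sa X) bE.
  + by case: (borel_sa X).
- exists 1 => x; rewrite indicE; case: (_ \in _); by rewrite ?normr1 ?normr0.
Qed.

Lemma cint_indic m j (E : set X) A : (0 < m)%N -> borel E -> measurable A ->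
  cint P Xa m j (\1_E : X -> R) A = P (A `&` Xa m j @^-1` E).
Proof.
move=> m0 bE mA; rewrite /cint.
rewrite (eq_integral (fun x => (\1_(Xa m j @^-1` E) x)%:E)); last first.
  move=> x _ /=; rewrite !indicE; congr ((_ : R)%:E); congr (_%:R).
rewrite integral_indic // 1?setIC //; exact: (Xa_meas hG hA).
Qed.

Lemma CID2_S : CID2 P Xa G -> forall j m A (E : set X), Gj G Xa j m A -> borel E ->
  P (A `&` Xa m.+1 j @^-1` E) = P (A `&` Xa m.+2 j @^-1` E).
Proof.
move=> h j m A E GA bE.
have mA := Gj_meas hG hA GA.
by rewrite -!cint_indic //; apply: h => //; exact: indic_bb.
Qed.

Lemma CID2_iii : CID2 P Xa G ->
  forall (n : nat) (j : I) (tau : Omega -> nat),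
      stopping_time G tau -> (forall w, (n <= tau w)%N) ->
      eq_in_law P
        (fun w i => if i == j then Xa (tau w).+1 j w else Xa n.+1 i w)
        (fun w i => Xa n.+1 i w).
Proof.
move=> h n j tau st tn.
have eT (E : set X) : (fun w => if j == j then Xa (tau w).+1 j w else Xa n.+1 j w) @^-1` E
    = [set w | E (Xa (tau w).+1 j w)].
  by apply/seteqP; split => w /=; rewrite eqxx.
apply: (law_pi (j:=j)).
- by move=> w i ij /=; rewrite (negbTE ij).
- move=> D SD; exact: (Gj_meas hG hA (Smj_Gj (n:=n) SD)).
- by move=> E bE; rewrite eT; exact: Xtau_meas.
- by move=> E bE; exact: (Xa_meas hG hA).
- move=> D E SD bE; rewrite eT.
  apply: stop_key => //.
  + by move=> m A GA; exact: CID2_S.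
  + exact: (Smj_Gj (n:=n) SD).
Qed.

End Part3.


Section Part3b.
Variables (R : realType) (d : measure_display) (Omega : measurableType d)
  (P : probability Omega R) (X : completePseudoMetricType R) (I : countType)
  (Xa : nat -> I -> Omega -> X) (G : nat -> set (set Omega)).
Hypotheses (hG : filtration G) (hA : adapted G Xa).

Definition IIIprop := forall (n : nat) (j : I) (tau : Omega -> nat),
  stopping_time G tau -> (forall w, (n <= tau w)%N) ->
  eq_in_law P (fun w i => if i == j then Xa (tau w).+1 j w else Xa n.+1 i w)
    (fun w i => Xa n.+1 i w).

Lemma iii_base : IIIprop -> forall n j (E : set X) B D, borel E -> G n B -> Smj j D ->
  P ((B `&` rowOf Xa n.+1 @^-1` D) `&` Xa n.+1 j @^-1` E) =
  P ((B `&` rowOf Xa n.+1 @^-1` D) `&` Xa n.+2 j @^-1` E).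
Proof.
move=> h n j E B D bE GB SD.
pose tau w := if w \in B then n.+1 else n.
have mB : measurable B := G_meas hG GB.
have st : stopping_time G tau.
  move=> m.
  have [->|mn1] := eqVneq m n.+1.
    have -> : tau @^-1` [set n.+1] = B.
      apply/seteqP; split => w /=; rewrite /tau.
      - by case: ifPn => [/set_mem //|_ hn]; exfalso; lia.
      - by move=> Bw; rewrite (mem_set Bw).
    exact: hG.2 _ _ GB.
  have [->|mn] := eqVneq m n.
    have -> : tau @^-1` [set n] = ~` B.
      apply/seteqP; split => w /=; rewrite /tau.
      - case: ifPn => [_ hn|/negP nB _]; first by exfalso; lia.
        by move=> Bw; apply: nB; exact: mem_set.
      - by move=> nB; rewrite ifN // notin_setE.
    exact: sa_setC (hG.1 n).1 GB.
  have -> : tau @^-1` [set m] = set0.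
    apply/seteqP; split => w //=; rewrite /tau.
    by case: ifPn => _ hw; [move: mn1|move: mn]; rewrite hw eqxx.
  by case: (hG.1 m).1.
have tn w : (n <= tau w)%N by rewrite /tau; case: ifPn.
have prodE : prod_sigma (I:=I) (X:=X) (D `&` [set g | E (g j)]).
  apply: (@sa_setI _ (prod_sigma (I:=I) (X:=X))); first exact: smallest_sigma_algebra.
  - exact: (Smj_prod SD).
  - have -> : [set g : I -> X | E (g j)] = setT `&` (fun g => g j) @^-1` E.
      by rewrite setTI.
    by apply: sub_sigma_algebra; exists j => //; exists E.
have lawB := h n j tau st tn _ prodE.
rewrite !preimage_setI in lawB.
set Z1 := (fun w i => if i == j then Xa (tau w).+1 j w else Xa n.+1 i w) in lawB.
have pre1 : Z1 @^-1` D = rowOf Xa n.+1 @^-1` D.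
  apply/seteqP; split => w /=; apply: (Smj_inv SD) => i ij; rewrite /Z1 /rowOf (negbTE ij) //.
have pre2 : Z1 @^-1` [set g | E (g j)] = [set w | E (Xa (tau w).+1 j w)].
  by apply/seteqP; split => w /=; rewrite /Z1 eqxx.
rewrite pre1 pre2 in lawB.
set C := rowOf Xa n.+1 @^-1` D in lawB *.
set XT := [set w | E (Xa (tau w).+1 j w)] in lawB *.
have lawB' : P (C `&` XT) = P (C `&` Xa n.+1 j @^-1` E) by exact: lawB.
have mC : measurable C := Gj_meas hG hA (Smj_Gj hG hA (n:=n) SD).
have mXT : measurable XT := Xtau_meas hG hA j st bE.
have mX1 : measurable (Xa n.+1 j @^-1` E) by exact: (Xa_meas hG hA).
have mX2 : measurable (Xa n.+2 j @^-1` E) by exact: (Xa_meas hG hA).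
rewrite (prE P (measurableI _ _ mC mXT)) (prE P (measurableI _ _ mC mX1)) in lawB'.
have lawR := EFin_inj lawB'.
have s1 := @pr_split _ _ _ P (C `&` XT) B (measurableI _ _ mC mXT) mB.
have s2 := @pr_split _ _ _ P (C `&` Xa n.+1 j @^-1` E) B (measurableI _ _ mC mX1) mB.
clear lawB pre1 pre2.
have e1 : C `&` XT `&` B = B `&` C `&` Xa n.+2 j @^-1` E.
  apply/seteqP; split => w /=.
  - by move=> [[Cw XTw] Bw]; split => //; move: XTw; rewrite /XT /= /tau (mem_set Bw).
  - by move=> [[Bw Cw] Xw]; split => //; split => //; rewrite /XT /= /tau (mem_set Bw).
have e2 : C `&` XT `&` ~` B = C `&` Xa n.+1 j @^-1` E `&` ~` B.
  apply/seteqP; split => w /=.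
  - move=> [[Cw XTw] nBw]; split => //; split => //; move: XTw.
    by rewrite /XT /= /tau ifN // notin_setE.
  - move=> [[Cw Xw] nBw]; split => //; split => //.
    by rewrite /XT /= /tau ifN // notin_setE.
have e3 : C `&` Xa n.+1 j @^-1` E `&` B = B `&` C `&` Xa n.+1 j @^-1` E.
  by apply/seteqP; split => w /= [[? ?] ?].
rewrite e1 e2 in s1; rewrite e3 in s2.
rewrite !(prE P); try by repeat apply: measurableI.
congr (_%:E); lra.
Qed.

Lemma iii_S : IIIprop -> forall n j (E : set X) A, borel E -> Gj G Xa j n A ->
  P (A `&` Xa n.+1 j @^-1` E) = P (A `&` Xa n.+2 j @^-1` E).
Proof.
move=> h n j E A bE GA.
pose Cn := fun A0 => exists B D, [/\ G n B, Smj j D & A0 = B `&` rowOf Xa n.+1 @^-1` D].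
pose L := [set A0 | measurable A0 /\ P (A0 `&` Xa n.+1 j @^-1` E) = P (A0 `&` Xa n.+2 j @^-1` E)].
have mX1 : measurable (Xa n.+1 j @^-1` E) by exact: (Xa_meas hG hA).
have mX2 : measurable (Xa n.+2 j @^-1` E) by exact: (Xa_meas hG hA).
suff : Gj G Xa j n `<=` L by move=> /(_ _ GA) [].
have GjC : Gj G Xa j n `<=` <<s Cn >>.
  apply: smallest_sub; first exact: smallest_sigma_algebra.
  move=> A0 [GA0|[i ij [B bB <-]]]; apply: sub_sigma_algebra.
  - exists A0, setT; split => //; first exact: sa_setT (Smj_sa X j).
    by rewrite preimage_setT setIT.
  - exists setT, (setT `&` (fun g => g i) @^-1` B); split.
    + exact: sa_setT (hG.1 n).1.
    + by apply: sub_sigma_algebra; exists i => //; exists B.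
    + by apply/seteqP; split => w /=; [move=> [_ ?]|move=> [_ [_ ?]]].
have LT : L setT.
  split => //; have := iii_base h (j:=j) bE (sa_setT (hG.1 n).1) (sa_setT (Smj_sa X j)).
  by rewrite preimage_setT !setTI.
apply: subset_trans GjC _; apply: dynkin_ind.
- move=> _ _ [B1 [D1 [g1 s1 ->]]] [B2 [D2 [g2 s2 ->]]].
  exists (B1 `&` B2), (D1 `&` D2); split.
  + exact: sa_setI (hG.1 n).1 g1 g2.
  + exact: sa_setI (Smj_sa X j) s1 s2.
  + by apply/seteqP; split => w /= [[? ?] [? ?]].
- move=> _ [B [D [GB SD ->]]]; split; last exact: iii_base.
  apply: measurableI; first exact: (G_meas hG GB).
  exact: (Gj_meas hG hA (Smj_Gj hG hA (n:=n) SD)).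
- split => //.
  + move=> A0 [mA0 eA0]; split; first exact: measurableC.
    have eD S : ~` A0 `&` S = S `\` A0 by rewrite setDE setIC.
    have fin S : measurable S -> (P S < +oo)%E.
      by move=> mS; rewrite (le_lt_trans (probability_le1 P mS)) ?ltry.
    rewrite !eD !measureD //; try exact: fin.
    have [_ eT] := LT; rewrite !setTI in eT; congr (_ - _)%E; first exact: eT.
    by rewrite setIC [in RHS]setIC; exact: eA0.
  + move=> F tF LF; split.
      by apply: bigcupT_measurable => k; case: (LF k).
    rewrite !setI_bigcupl !measure_bigcup //.
    * by apply: eq_eseriesr => k _; case: (LF k).
    * by move=> k _; apply: measurableI => //; case: (LF k).
    * exact: trivIset_setIr.
    * by move=> k _; apply: measurableI => //; case: (LF k).
    * exact: trivIset_setIr.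
Qed.

Lemma iii_CID2 : IIIprop -> CID2 P Xa G.
Proof.
move=> h j f n A bf GA; rewrite /cint.
apply: (transfer (A:=A) (phi1:=Xa n.+1 j) (phi2:=Xa n.+2 j)) => //.
- exact: (Gj_meas hG hA GA).
- by move=> E bE; exact: (Xa_meas hG hA).
- by move=> E bE; exact: (Xa_meas hG hA).
- by move=> E bE; exact: iii_S.
Qed.

End Part3b.

Unset Implicit Arguments. Set Strict Implicit.

Theorem mainTheorem3 (R : realType) (d : measure_display) (Omega : measurableType d)
  (P : probability Omega R) (X : completePseudoMetricType R) (I : countType)
  (Xa : nat -> I -> Omega -> X) (G : nat -> set (set Omega)) :
  polish X -> filtration G -> adapted G Xa ->
  (partially_cid P G Xa <->
   (forall (j : I) (f : X -> R), bounded_borel_fun f ->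
    forall M : nat -> Omega -> R,
      (forall n, is_cond_exp P (Gj G Xa j n) (f \o Xa n.+1 j) (M n)) ->
      martingale P (Gj G Xa j) M)) /\
  (partially_cid P G Xa <->
   (forall (n : nat) (j : I) (tau : Omega -> nat),
      stopping_time G tau -> (forall w, (n <= tau w)%N) ->
      eq_in_law P
        (fun w i => if i == j then Xa (tau w).+1 j w else Xa n.+1 i w)
        (fun w i => Xa n.+1 i w))).
Proof.
move=> _ hG hA; split.
- apply: iff_trans (cid_CID2 P hG hA) _.
  exact: iff_sym (mart_CID2 P hG hA).
- apply: iff_trans (cid_CID2 P hG hA) _; split.
  + exact: CID2_iii hG hA.
  + exact: iii_CID2 hG hA.
Qed.
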